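(* Let $\vec w=(w_1,\dots,w_n)\in[0,1]^n$ with $\sum_{i=1}^n w_i=1$. Then there is a distributive family $\Gamma=\{f_i:[0,1]^n\to[0,1]: i=1,\dots,n\}$ on $\langle [0,1], S_{LK}, T_P\rangle$ such that $DYOWA_\Gamma(\vec x)=OWA_{\vec w}(\vec x)$ for all $\vec x\in[0,1]^n$. That is, every Yager OWA function is a DYOWA function.
   Context: $T_P(x,y)=xy$ (product t-norm) and $S_{LK}(x,y)=\min(x+y,1)$ (Łukasiewicz t-conorm) on $[0,1]$; $n$-ary versions by left folding, e.g. $\bigoplus_{i=1}^n x_i=(\cdots((x_1\oplus x_2)\oplus x_3)\cdots)\oplus x_n$ with $\oplus=S_{LK}$, $\otimes=T_P$. Yager's OWA: $OWA_{\vec w}(x_1,\dots,x_n)=\sum_{i=1}^n w_i x_{(i)}$, where $(x_{(1)},\dots,x_{(n)})$ is the decreasing rearrangement of $(x_1,\dots,x_n)$. A finite family $\Gamma=\{f_i:L^n\to L\}$ is a weight function family on $\langle L,\oplus,\otimes\rangle$ if $\bigoplus_{i=1}^n f_i(\vec a)=\top_L$ for every $\vec a$; it is a distributive family if moreover $c\otimes\bigl(\bigoplus_{i=1}^n f_i(\vec a)\bigr)=\bigoplus_{i=1}^n (c\otimes f_i(\vec a))$ for all $c\in L$, $\vec a\in L^n$. The Lizasoain–Moreno function is $\mathscr{LM}(a_1,\dots,a_n)=(b_1,\dots,b_n)$ with $b_k=\bigvee_{\{j_1<\dots<j_k\}\subseteq\{1,\dots,n\}} a_{j_1}\wedge\cdots\wedge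 a_{j_k}$ (join over all $k$-element subsets). $DYOWA_\Gamma(\vec a)=\bigoplus_{i=1}^n \bigl(f_i(\vec a)\otimes b_i\bigr)$, where $(b_1,\dots,b_n)=\mathscr{LM}(\vec a)$. *)

(* Defs.v *)
(* the unit interval [0,1] of an arbitrary real field R
   (the paper's [0,1] is the case R = reals). *)
From HB Require Import structures.
From mathcomp Require Import all_boot all_order all_algebra.
Set Implicit Arguments. Unset Strict Implicit. Unset Printing Implicit Defensive.
Import Order.TTheory GRing.Theory Num.Theory.
Local Open Scope ring_scope.

Section Defs.
Variable R : realFieldType.

Definition in01 (x : R) : bool := (0 <= x) && (x <= 1).
(* a vector of [0,1]^n, indices 'I_n (i stands for i+1) *)
Definition in01v (n : nat) (a : 'I_n -> R) : Prop := forall i, in01 (a i).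

Definition T_P (x y : R) : R := x * y.
Definition S_LK (x y : R) : R := Num.min (x + y) 1.

(* n-ary version by left folding: (((x1 op x2) op x3) ... ) op xn;
   the (irrelevant) empty case is 0 *)
Definition lfold (op : R -> R -> R) (s : seq R) : R :=
  match s with [::] => 0 | x :: t => foldl op x t end.

Definition oplusn (n : nat) (g : 'I_n -> R) : R :=
  lfold S_LK [seq g i | i <- enum 'I_n].

Definition decr_rearr (n : nat) (x : 'I_n -> R) : seq R :=
  sort (fun a b : R => b <= a) [seq x i | i <- enum 'I_n].

Definition OWA (n : nat) (w x : 'I_n -> R) : R :=
  \sum_(i < n) w i * nth 0 (decr_rearr x) i.

Definition weight_function_family (n : nat) (f : 'I_n -> ('I_n -> R) -> R) : Prop :=
  (forall i a, in01v a -> in01 (f i a)) /\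
  (forall a, in01v a -> oplusn (fun i => f i a) = 1).

Definition distributive_family (n : nat) (f : 'I_n -> ('I_n -> R) -> R) : Prop :=
  weight_function_family f /\
  (forall c a, in01 c -> in01v a ->
     T_P c (oplusn (fun i => f i a)) = oplusn (fun i => T_P c (f i a))).

(* Lizasoain-Moreno function: b_k = join over k-subsets of the meet
   (component i : 'I_n corresponds to k = i+1); join/meet on [0,1] are max/min,
   with bottom 0 and top 1 *)
Definition LM (n : nat) (a : 'I_n -> R) (i : 'I_n) : R :=
  \big[Num.max/0]_(A : {set 'I_n} | #|A| == i.+1)
     \big[Num.min/1]_(j in A) a j.

Definition DYOWA (n : nat) (f : 'I_n -> ('I_n -> R) -> R) (a : 'I_n -> R) : R :=
  oplusn (fun i => T_P (f i a) (LM a i)).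

End Defs.

(* Main.v *)
Require Import Defs.
From HB Require Import structures.
From mathcomp Require Import all_boot all_order all_algebra.
Import Order.TTheory GRing.Theory Num.Theory.
Local Open Scope ring_scope.

Section Aux.
Variable R : realFieldType.

Lemma foldl_SLK (t : seq R) (x : R) : 0 <= x -> all (fun y => 0 <= y) t ->
  x + \sum_(y <- t) y <= 1 -> foldl (@S_LK R) x t = x + \sum_(y <- t) y.
Proof.
elim: t x => [|y t IH] x hx /= ht hs; first by rewrite big_nil addr0.
move/andP: ht => [hy ht].
rewrite big_cons in hs *.
have st : 0 <= \sum_(z <- t) z by rewrite big_seq; apply: sumr_ge0 => z /(allP ht).
have e : S_LK x y = x + y.
  rewrite /S_LK; apply: min_l; apply: le_trans hs; rewrite addrA lerDl //.
rewrite e IH ?addrA //; first exact: addr_ge0.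
by rewrite -addrA.
Qed.

Lemma lfold_SLK (s : seq R) : all (fun y => 0 <= y) s ->
  \sum_(y <- s) y <= 1 -> lfold (@S_LK R) s = \sum_(y <- s) y.
Proof.
case: s => [|y t] /=; first by rewrite big_nil.
move=> /andP [hy ht]; rewrite big_cons => hs.
exact: foldl_SLK.
Qed.

Lemma oplusn_sum n (g : 'I_n -> R) : (forall i, 0 <= g i) ->
  \sum_(i < n) g i <= 1 -> oplusn g = \sum_(i < n) g i.
Proof.
move=> hg hs.
have e : \sum_(y <- [seq g i | i <- enum 'I_n]) y = \sum_(i < n) g i.
  by rewrite big_map big_enum.
rewrite /oplusn lfold_SLK ?e //.
by apply/allP => y /mapP [i _ ->].
Qed.

Lemma LM_sort n (x : 'I_n -> R) (hx : in01v x) (k : 'I_n) :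
  LM x k = nth 0 (decr_rearr x) k.
Proof.
set t := sort (fun i j : 'I_n => x j <= x i) (enum 'I_n).
have ht : decr_rearr x = map x t by rewrite /decr_rearr sort_map.
have pt : perm_eq t (enum 'I_n) by rewrite perm_sort.
have ut : uniq t by rewrite (perm_uniq pt) enum_uniq.
have sz : size t = n by rewrite (perm_size pt) size_enum_ord.
have mt : forall j, j \in t by move=> j; rewrite (perm_mem pt) mem_enum.
have st : sorted (fun i j : 'I_n => x j <= x i) t.
  by apply: sort_sorted => i j; exact: le_total.
have mono : forall i j, (i <= j)%N -> (j < n)%N -> x (nth k t j) <= x (nth k t i).
  move=> i j hij hj.
  apply: (sorted_leq_nth (leT := fun i j : 'I_n => x j <= x i)) => //.
  - by move=> a b c hba hcb; exact: le_trans hcb hba.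
  - by rewrite inE sz (leq_ltn_trans hij).
  - by rewrite inE sz.
have kn : (k < n)%N := ltn_ord k.
set v := x (nth k t k).
have hv : nth 0 (decr_rearr x) k = v by rewrite ht (nth_map k) ?sz.
rewrite hv.
have v01 := hx (nth k t k); move/andP: v01 => [v0 v1].
apply/eqP; rewrite eq_le; apply/andP; split.
- rewrite /LM; apply: (big_ind (fun y => y <= v)) => //.
    by move=> a b ha hb; rewrite ge_max ha hb.
  move=> A /eqP cA.
  have : [exists j in A, (k <= index j t)%N].
    apply: contraT; move/exists_inPn => H.
    have sub : A \subset [set j in take k t].
      apply/subsetP => j jA; rewrite inE.
      have hjk : (index j t < k)%N by rewrite ltnNge H.
      rewrite -(nth_index k (mt j)) -(nth_take k hjk) mem_nth // size_take sz kn //.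
    have := subset_leq_card sub; rewrite cA.
    have : (#|[set j in take k t]| <= k)%N.
      rewrite cardsE; apply: leq_trans (card_size _) _.
      by rewrite size_take sz kn.
    move=> h1 h2; have := leq_trans h2 h1; by rewrite ltnn.
  case/exists_inP => j jA hj.
  rewrite (bigD1 j) //=.
  rewrite ge_min; apply/orP; left.
  have ji : (index j t < n)%N by rewrite -[X in (_ < X)%N]sz index_mem.
  by have := mono _ _ hj ji; rewrite nth_index.
- rewrite /LM.
  set A0 := [set j in take k.+1 t].
  have cA0 : #|A0| == k.+1.
    by rewrite cardsE (card_uniqP _) ?take_uniq // size_takel // sz.
  rewrite (bigD1 A0) //= le_max; apply/orP; left.
  apply: (big_ind (fun y => v <= y)) => //.
    by move=> a b ha hb; rewrite le_min ha hb.
  move=> j; rewrite inE => jt.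
  have hi : (index j (take k.+1 t) < k.+1)%N.
    by have := index_mem j (take k.+1 t); rewrite jt size_takel // sz.
  have ej : index j (take k.+1 t) = index j t.
    have e1 := nth_index k jt.
    rewrite nth_take // in e1.
    rewrite -{2}e1 index_uniq //.
    by rewrite sz; apply: leq_trans hi kn.
  rewrite ej in hi.
  by have := mono _ _ (hi : (index j t <= k)%N) kn; rewrite nth_index.
Qed.

End Aux.

Theorem corollary1 (R : realFieldType) (n : nat) (w : 'I_n -> R)
  (hw : in01v w) (hsum : \sum_(i < n) w i = 1) :
  exists f : 'I_n -> ('I_n -> R) -> R,
    distributive_family f /\
    (forall x : 'I_n -> R, in01v x -> DYOWA f x = OWA w x).
Proof.
have w0 : forall i, 0 <= w i by move=> i; case/andP: (hw i).
have o1 : oplusn w = 1 by rewrite oplusn_sum ?hsum.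
exists (fun i _ => w i); split; [split; [split|]|].
- by move=> i a _; exact: hw.
- by move=> a _; exact: o1.
- move=> c a /andP [c0 c1] _; rewrite /= o1 /T_P mulr1 oplusn_sum.
  + by rewrite -mulr_sumr hsum mulr1.
  + by move=> i; rewrite mulr_ge0.
  + by rewrite -mulr_sumr hsum mulr1.
- move=> x hx; rewrite /DYOWA /OWA /T_P.
  have L01 : forall i, 0 <= LM x i <= 1.
    move=> i; rewrite LM_sort //.
    have : nth 0 (decr_rearr x) i \in decr_rearr x.
      by apply: mem_nth; rewrite /decr_rearr size_sort size_map size_enum_ord.
    rewrite /decr_rearr mem_sort => /mapP [j _ ->]; exact: hx.
  rewrite oplusn_sum.
  + by apply: eq_bigr => i _; rewrite LM_sort.
  + by move=> i; rewrite mulr_ge0 //; case/andP: (L01 i).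
  + rewrite -hsum; apply: ler_sum => i _; rewrite ler_piMr //.
    by case/andP: (L01 i).
Qed.
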